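(* There is an absolute constant $c>0$ such that for every $n,m\ge1$, every sequence $S\in[n]^m$ and every initial BST $T$ on $[n]$, $$\mathbb E_\pi\bigl[\mathrm{MTR}_T(\pi(S))\bigr]\le c\Bigl(\mathit{WS}(S)+m+\sum_{i=1}^n d_T(i)\Bigr),$$ where the expectation is over a uniformly random permutation $\pi$ of $[n]$.
   Context: For $S=(s_1,\dots,s_m)$ and a permutation $\pi$ of $[n]$, let $\pi(S)=(\pi(s_1),\dots,\pi(s_m))$. Move-to-root: each accessed key $x$ is found by searching from the root, at cost equal to the number of nodes on the root-to-$x$ path, i.e. $d(x)+1$ with $d$ the current depth (root at depth $0$). Then $x$ is rotated to the root by single rotations. $\mathrm{MTR}_T(S)$ is the total cost of Move-to-root on $S$ starting from the tree $T$, and $d_T(i)$ is the depth of $i$ in $T$. Working set bound: for $j\le m$, let $\rho(j)=\max\{k<j: s_k=s_j\}$, with $\rho(j)=0$ if there is no such $k$. Let $w_S(j)=\{s_i:\rho(j)<i\le j\}$. Then $\mathit{WS}(S)=\sum_{j=1}^m\log_2|w_S(j)|$. *)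

(* Defs.v *)
From Stdlib Require Import Reals.
From HB Require Import structures.
From mathcomp Require Import all_boot all_order all_algebra all_fingroup.
From mathcomp Require Import Rstruct.

Set Implicit Arguments.
Unset Strict Implicit.
Unset Printing Implicit Defensive.

Inductive tree (K : Type) : Type :=
| Leaf : tree K
| Node : tree K -> K -> tree K -> tree K.
Arguments Leaf {K}.

Fixpoint inorder (K : Type) (t : tree K) : seq K :=
  match t with
  | Leaf => [::]
  | Node l k r => inorder l ++ k :: inorder r
  end.

(* A BST on [n] (keys 'I_n, i.e. {0,...,n-1} standing for {1,...,n}):
   its in-order traversal is exactly 0 < 1 < ... < n-1, each key once. *)
Definition is_bst_on (n : nat) (t : tree 'I_n) : Prop :=
  inorder t = enum 'I_n.

Fixpoint depth (n : nat) (x : 'I_n) (t : tree 'I_n) : nat :=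
  match t with
  | Leaf => 0
  | Node l k r =>
      if x == k then 0
      else if (x < k)%N then (depth x l).+1 else (depth x r).+1
  end.

Fixpoint move_to_root (n : nat) (x : 'I_n) (t : tree 'I_n) : tree 'I_n :=
  match t with
  | Leaf => Leaf
  | Node l k r =>
      if x == k then t
      else if (x < k)%N then
        match move_to_root x l with
        | Node a y b => Node a y (Node b k r)
        | Leaf => t
        end
      else
        match move_to_root x r with
        | Node a y b => Node (Node l k a) y b
        | Leaf => t
        end
  end.

Fixpoint MTR (n : nat) (t : tree 'I_n) (s : seq 'I_n) : nat :=
  match s with
  | [::] => 0
  | x :: s' => (depth x t).+1 + MTR (move_to_root x t) s'
  end.

(* Working-set bound, with 1-indexed positions: s_i := onth s i.-1. *)
Definition rho (T : eqType) (s : seq T) (j : nat) : nat :=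
  \max_(1 <= k < j | onth s k.-1 == onth s j.-1) k.

Definition wset_size (T : eqType) (s : seq T) (j : nat) : nat :=
  size (undup [seq onth s i.-1 | i <- index_iota (rho s j).+1 j.+1]).

Local Open Scope ring_scope.

Definition log2 (x : R) : R := (ln x / ln 2)%R.

Definition WS (T : eqType) (s : seq T) : R :=
  (\sum_(1 <= j < (size s).+1) log2 (wset_size s j)%:R).

Definition expected_MTR (n : nat) (t : tree 'I_n) (s : seq 'I_n) : R :=
  ((\sum_(p : 'S_n) (MTR t (map p s))%:R) / (n`!)%:R).

(* Main.v *)
Require Import Defs.
From Stdlib Require Import Reals.
From HB Require Import structures.
From mathcomp Require Import all_boot all_order all_algebra all_fingroup.
From mathcomp Require Import Rstruct.
From mathcomp Require Import zify.
Import Order.TTheory GRing.Theory Num.Theory.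
Set Implicit Arguments.
Unset Strict Implicit.
Unset Printing Implicit Defensive.
Section Trees.
Variable n : nat.
Implicit Types (x y a k : 'I_n) (t : tree 'I_n).

Fixpoint pth x t : seq 'I_n :=
  match t with
  | Leaf => [::]
  | Node l k r => if x == k then [::] else k :: (if (x < k)%N then pth x l else pth x r)
  end.

Lemma depthE x t : depth x t = size (pth x t).
Proof. elim: t => //= l IHl k r IHr; case: eqP => //= _; case: ifP => _ /=; auto. Qed.

Definition ltord := fun a b : 'I_n => (a < b)%N.
Definition bst t := pairwise ltord (inorder t).

Lemma bst_node l k r : bst (Node l k r) ->
  [/\ bst l, bst r, {in inorder l, forall y, (y < k)%N} & {in inorder r, forall y, (k < y)%N}].
Proof.
rewrite /bst /= pairwise_cat pairwise_cons allrel_consr.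
case/and3P=> /andP [Hl _] Pl /andP[Hk Pr]; split => //.
- by move=> y /(allP Hl).
- by move=> y /(allP Hk).
Qed.

Lemma pth_sub x t : {subset pth x t <= inorder t}.
Proof.
elim: t => //= l IHl k r IHr y; case: eqP => // _.
rewrite inE mem_cat inE; case/orP=> [->|]; first by rewrite orbT.
by case: ifP => _ H; [rewrite (IHl _ H) | rewrite (IHr _ H) !orbT].
Qed.

Lemma bst_uniq t : bst t -> uniq (inorder t).
Proof. by move=> H; apply: (pairwise_uniq _ H) => a; rewrite /ltord ltnn. Qed.

Lemma pth_uniq x t : bst t -> uniq (pth x t).
Proof.
elim: t => //= l IHl k r IHr B; case/bst_node: (B) => Bl Br Hl Hr.
case: eqP => // _ /=; case: ifP => _; apply/andP; split; auto.
- by apply/negP => /pth_sub /Hl; rewrite ltnn.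
- by apply/negP => /pth_sub /Hr; rewrite ltnn.
Qed.

Lemma mtr_inorder a t : inorder (move_to_root a t) = inorder t.
Proof.
elim: t => //= l IHl k r IHr; case: eqP => // _; case: ifP => _.
- by case E: (move_to_root a l) IHl => [|A y B] //= <-; rewrite -catA.
- by case E: (move_to_root a r) IHr => [|A y B] //= <-; rewrite -catA.
Qed.

Lemma mtr_root a t : bst t -> a \in inorder t ->
  exists A B, move_to_root a t = Node A a B.
Proof.
elim: t => //= l IHl k r IHr B; case/bst_node: (B) => Bl Br Hl Hr.
rewrite mem_cat inE => Ha.
case: eqP => [->|/eqP ne]; first by exists l, r.
case: ifP => lt.
- have al : a \in inorder l.
    case/or3P: Ha => //; [by rewrite (negbTE ne) | by move/Hr; lia].
  by case: (IHl Bl al) => A [B' ->]; exists A, (Node B' k r).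
- have ar : a \in inorder r.
    case/or3P: Ha => //; [by move/Hl; lia | by rewrite (negbTE ne)].
  by case: (IHr Br ar) => A [B' ->]; exists (Node l k A), B'.
Qed.

Lemma pth_root A a B : pth a (Node A a B) = [::].
Proof. by rewrite /= eqxx. Qed.

Definition sb a x y := ((x < a < y)%N || (y < a < x)%N).

Lemma sb_below a x y : (x < a)%N -> (y < a)%N -> ~~ sb a x y.
Proof. rewrite /sb => h1 h2; lia. Qed.
Lemma sb_above a x y : (a < x)%N -> (a < y)%N -> ~~ sb a x y.
Proof. rewrite /sb => h1 h2; lia. Qed.
Lemma ltgt x y : x != y -> (x < y)%N = false -> (y < x)%N.
Proof. move=> h1 h2; have : (x:nat) != y by []. by move: h2; clear; lia. Qed.

Lemma lemA a x y t : bst t -> a \in inorder t -> x != a ->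
  y \in pth x (move_to_root a t) -> (y == a) || ((y \in pth x t) && ~~ sb a x y).
Proof.
elim: t => //= l IHl k r IHr B; case/bst_node: (B) => Bl Br Hl Hr.
rewrite mem_cat inE => Ha xa.
case: eqP => [ak|/eqP ne].
- subst a; rewrite /= (negbTE xa) inE => /orP [->//|Hy].
  apply/orP; right; rewrite Hy orbT /=.
  move: Hy; case: ifP => xk Hy.
  + exact: sb_below (Hl _ (pth_sub Hy)).
  + exact: sb_above (ltgt xa xk) (Hr _ (pth_sub Hy)).
case: ifP => lt.
- have al : a \in inorder l.
    case/or3P: Ha => //; [by rewrite (negbTE ne) | by move/Hr; rewrite ltnNge (ltnW lt)].
  case: (mtr_root Bl al) => A [B' E]; rewrite E /= (negbTE xa) inE.
  have := IHl Bl al xa; rewrite E /= (negbTE xa) => IH.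
  case/orP => [->//|]; case: ifP => xa'.
  + move=> Hy; have := IH; rewrite xa' inE Hy orbT => /(_ isT) /orP [->//|/andP[H1 H2]].
    have xk : (x < k)%N by apply: ltn_trans lt.
    have -> : (x == k) = false by apply/negbTE; rewrite neq_ltn xk.
    by rewrite xk inE H1 H2 orbT andbT orbT.
  + have ax := ltgt xa xa'.
    case: eqP => [->|/eqP xk2]; first by [].
    rewrite inE; case/orP => [/eqP ->|].
    * apply/orP; right; rewrite inE eqxx /=; exact: sb_above.
    case: ifP => xk3 Hy.
    * have := IH; rewrite xa' inE Hy orbT => /(_ isT) /orP [->//|/andP[H1 H2]].
      by rewrite inE H1 H2 orbT andbT orbT.
    * apply/orP; right; rewrite inE Hy orbT /=.
      apply: sb_above ax (ltn_trans lt (Hr _ (pth_sub Hy))).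
- have ka := ltgt ne lt.
  have ar : a \in inorder r.
    case/or3P: Ha => //; [by move/Hl; rewrite ltnNge (ltnW ka) | by rewrite (negbTE ne)].
  case: (mtr_root Br ar) => A [B' E]; rewrite E /= (negbTE xa) inE.
  have := IHr Br ar xa; rewrite E /= (negbTE xa) => IH.
  case/orP => [->//|]; case: ifP => xa'.
  + case: eqP => [->|/eqP xk2]; first by [].
    rewrite inE; case/orP => [/eqP ->|].
    * apply/orP; right; rewrite inE eqxx /=; exact: sb_below.
    case: ifP => xk3 Hy.
    * apply/orP; right; rewrite inE Hy orbT /=.
      apply: sb_below xa' (ltn_trans (Hl _ (pth_sub Hy)) ka).
    * have := IH; rewrite xa' inE Hy orbT => /(_ isT) /orP [->//|/andP[H1 H2]].
      by rewrite inE H1 H2 orbT andbT orbT.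
  + move=> Hy; have := IH; rewrite xa' inE Hy orbT => /(_ isT) /orP [->//|/andP[H1 H2]].
    have ax := ltgt xa xa'.
    have kx : (k < x)%N by apply: ltn_trans ax.
    have -> : (x == k) = false by apply/negbTE; rewrite neq_ltn kx orbT.
    by rewrite ltnNge (ltnW kx) /= inE H1 H2 orbT andbT orbT.
Qed.

End Trees.
Section Run.
Variable n : nat.
Implicit Types (x y a k : 'I_n) (t : tree 'I_n) (u : seq 'I_n).

Definition run t u := foldl (fun t a => move_to_root a t) t u.
Definition full t := inorder t = enum 'I_n.

Lemma full_bst t : full t -> bst t.
Proof.
rewrite /bst => ->; have := iota_ltn_sorted 0 n.
rewrite -val_enum_ord (sorted_pairwise ltn_trans) pairwise_map. by [].
Qed.

Lemma full_mtr a t : full t -> full (move_to_root a t).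
Proof. by rewrite /full mtr_inorder. Qed.

Lemma full_run t u : full t -> full (run t u).
Proof. elim: u t => //= a u IH t Ht; apply: IH; exact: full_mtr. Qed.

Definition Cnd u x y := has (fun i => (nth x u i == y) && all (fun b => ~~ sb b x y) (drop i u)) (iota 0 (size u)).

Lemma lemB t u x y : full t -> x \notin u -> y \in pth x (run t u) -> (y \in pth x t) || Cnd u x y.
Proof.
move=> Ft; elim/last_ind: u => [|u a IH] //=; first by move=> _ ->.
rewrite mem_rcons inE negb_or => /andP [xa xu].
rewrite /run foldl_rcons -/(run t u) => Hy.
have := lemA (full_bst (full_run u Ft)) _ xa Hy.
rewrite (full_run u Ft) mem_enum => /(_ isT) /orP [/eqP ->|/andP [H1 H2]].
  apply/orP; right; apply/hasP; exists (size u).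
    by rewrite mem_iota size_rcons /= ltnS leqnn.
  by rewrite nth_rcons ltnn eqxx eqxx /= -cats1 drop_size_cat //= /sb ltnn !andbF.
case/orP: (IH xu H1) => [->//|/hasP [i]]; rewrite mem_iota /= => iu /andP [/eqP E Hall].
apply/orP; right; apply/hasP; exists i.
  by rewrite mem_iota size_rcons /= ltnS ltnW.
by rewrite nth_rcons iu E eqxx /= -cats1 drop_cat iu all_cat Hall /= H2.
Qed.

Fixpoint aft x u := match u with
  | [::] => [::]
  | a :: u' => if x \in u' then aft x u' else if a == x then u' else u end.

Lemma aft_notin x u : x \notin aft x u.
Proof.
elim: u => //= a u IH; case: ifP => // xu; case: eqP => [_|/eqP ax]; first by rewrite xu.
by rewrite inE negb_or xu eq_sym ax.
Qed.

Lemma aft_split x u : x \in u -> exists u1, u = u1 ++ x :: aft x u.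
Proof.
elim: u => //= a u IH; rewrite inE; case: ifP => xu.
  by case: (IH xu) => u1 E _; exists (a :: u1); rewrite {1}E.
rewrite orbF => /eqP ->; rewrite eqxx; by exists [::].
Qed.

Lemma aft_nin x u : x \notin u -> aft x u = u.
Proof.
elim: u => //= a u IH; rewrite inE negb_or => /andP [xa xu].
by rewrite (negbTE xu) eq_sym (negbTE xa).
Qed.

Lemma run_cat t u1 u2 : run t (u1 ++ u2) = run (run t u1) u2.
Proof. by rewrite /run foldl_cat. Qed.

Lemma lemC t u x : full t ->
  (depth x (run t u) <= #|[set y | Cnd (aft x u) x y]| + (x \notin u) * depth x t)%N.
Proof.
move=> Ft; rewrite depthE cardE.
case: (boolP (x \in u)) => xu /=.
- case: (aft_split xu) => u1 E; rewrite addn0 {1}E run_cat /=.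
  set t1 := move_to_root x (run t u1).
  have F1 : full t1 by apply: full_mtr; apply: full_run.
  apply: uniq_leq_size; first by apply: pth_uniq; apply: full_bst; apply: full_run.
  move=> y Hy; have := lemB F1 (aft_notin x u) Hy.
  case: (@mtr_root _ x _ (full_bst (full_run u1 Ft))); first by rewrite (full_run u1 Ft) mem_enum.
  move=> A [B E1]; rewrite /t1 E1 pth_root in_nil /= => HC.
  by rewrite mem_enum inE.
- rewrite mul1n (aft_nin xu) addnC depthE -size_cat.
  apply: uniq_leq_size; first by apply: pth_uniq; apply: full_bst; apply: full_run.
  move=> y Hy; rewrite mem_cat; case/orP: (lemB Ft xu Hy) => [->//|HC].
  by rewrite mem_enum inE HC orbT.
Qed.

End Run.
Lemma count_le2 (T : eqType) (P P1 P2 : pred T) s :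
  {in s, forall b, P b -> P1 b || P2 b} -> (count P s <= count P1 s + count P2 s)%N.
Proof.
elim: s => //= a s IH H.
have IH' := IH (fun b bs => H b (@mem_behead _ (a :: s) _ bs)).
have Ha := H a (mem_head a s).
move: Ha IH'; case: (P a); case: (P1 a); case: (P2 a) => //= Ha; lia.
Qed.

Lemma count_le1 (T : eqType) (q : pred T) s :
  uniq s -> {in s &, forall a b, q a -> q b -> a = b} -> (count q s <= 1)%N.
Proof.
move=> us H; rewrite -size_filter.
case E: (filter q s) => [|a0 r] //.
have a0f : a0 \in filter q s by rewrite E mem_head.
rewrite -E; apply: (@uniq_leq_size _ _ [:: a0]); first exact: filter_uniq.
move=> y yf; rewrite inE; apply/eqP.
move: yf a0f; rewrite !mem_filter => /andP [qy ys] /andP [q0 s0]; exact: H.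
Qed.

Lemma sum_const_seq (T : Type) (s : seq T) (c : nat) : (\sum_(i <- s) c = size s * c)%N.
Proof. elim: s => [|a s IH]; by rewrite ?big_nil ?big_cons ?IH. Qed.

Section Sym.
Variable n : nat.
Implicit Types (x y a b w X : 'I_n) (B : seq 'I_n) (p : 'S_n).

Definition Nb p X B w := all (fun b => ~~ sb (p b) (p X) (p w)) B.

Lemma cnt2 p X B : X \notin B -> (count (Nb p X B) (undup B) <= 2)%N.
Proof.
move=> XB.
apply: (leq_trans (count_le2 (P1 := fun b => Nb p X B b && (p X < p b)%N)
                              (P2 := fun b => Nb p X B b && (p b < p X)%N) _)).
  move=> b; rewrite mem_undup => bB ->; rewrite /=.
  have : p b != p X by apply/negP => /eqP /perm_inj E; move: XB; rewrite -E bB.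
  move=> ne; have : (p b : nat) != p X by []. clear; lia.
have -> : 2 = (1 + 1)%N by [].
apply: leq_add; apply: count_le1 (undup_uniq B) _ => a c; rewrite !mem_undup => aB cB /andP [Na ha] /andP [Nc hc];
  apply: perm_inj; apply: val_inj; (case: (ltngtP (p a) (p c)) => h; last exact: h);
  move: (allP Na c cB) (allP Nc a aB) ha hc h; rewrite /sb; clear; lia.
Qed.

Lemma lemD X B w : w \in B -> X \notin B ->
  ((\sum_(p : 'S_n) (Nb p X B w : nat)) * size (undup B) <= 2 * n`!)%N.
Proof.
move=> wB XB.
have Hsym : forall b, b \in B -> (\sum_(p : 'S_n) (Nb p X B b : nat) = \sum_(p : 'S_n) (Nb p X B w : nat))%N.
  move=> b bB; rewrite (reindex_inj (mulgI (tperm w b))); apply: eq_bigr => p _.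
  have Xw : w != X by apply/negP => /eqP E; move: XB; rewrite -E wB.
  have Xb : b != X by apply/negP => /eqP E; move: XB; rewrite -E bB.
  have HB : map (tperm w b) B =i B.
    move=> c; apply/idP/idP.
    + case/mapP => d dB ->; by case: (tpermP w b d).
    + move=> cB; apply/mapP; exists (tperm w b c); last by rewrite tpermK.
      by case: (tpermP w b c).
  rewrite /Nb !permM tpermD // tpermR; symmetry.
  rewrite -(eq_all_r HB (fun c => ~~ sb (p c) (p X) (p w))) all_map; congr (nat_of_bool _); elim: (B) => //= d s ->; by rewrite permM.
rewrite mulnC.
have -> : (size (undup B) * \sum_p (Nb p X B w : nat) = \sum_(b <- undup B) \sum_(p : 'S_n) (Nb p X B b : nat))%N.
  rewrite -sum_const_seq; apply: eq_big_seq => b; rewrite mem_undup => bB; by rewrite Hsym.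
rewrite exchange_big /=.
apply: (@leq_trans (\sum_(p : 'S_n) 2)); last by rewrite sum_nat_const card_Sn mulnC.
apply: leq_sum => p _; rewrite -big_mkcond /= sum1_count; exact: cnt2.
Qed.

End Sym.
Section PerPi.
Variable n : nat.
Implicit Types (x y a w X : 'I_n) (t T : tree 'I_n) (u V S : seq 'I_n) (p : 'S_n).

Fixpoint suf w u := match u with
  | [::] => [::]
  | a :: u' => if w \in u' then suf w u' else u end.

Lemma suf_subset w u : {subset suf w u <= u}.
Proof. elim: u => //= a u IH; case: ifP => _ z zs //; by rewrite inE (IH z zs) orbT. Qed.

Lemma suf_sub w u i x0 : (i < size u)%N -> nth x0 u i = w -> {subset suf w u <= drop i u}.
Proof.
elim: u i => //= a u IH [|i] /=.
- move=> _ <-; case: ifP => _ z zs //; by rewrite inE (suf_subset zs) orbT.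
- rewrite ltnS => iu E; rewrite ifT; first exact: IH.
  by rewrite -E mem_nth.
Qed.

Lemma suf_mem w u : w \in u -> w \in suf w u.
Proof. elim: u => //= a u IH; case: ifP => // wu _; exact: IH. Qed.

Lemma Cnd_perm p V X w : Cnd (map p V) (p X) (p w) -> (w \in V) && Nb p X (suf w V) w.
Proof.
case/hasP => i; rewrite mem_iota size_map /= => iV /andP [/eqP E Hall].
rewrite (nth_map X) // in E; have E' := perm_inj E.
have wV : w \in V by rewrite -E' mem_nth.
rewrite wV /=; apply/allP => b /(suf_sub iV E') bd.
by move: Hall; rewrite -map_drop all_map => /allP /(_ b bd).
Qed.

Lemma card_Cnd p V X :
  (#|[set y | Cnd (map p V) (p X) y]| <= \sum_(w : 'I_n) ((w \in V) && Nb p X (suf w V) w : nat))%N.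
Proof.
rewrite -sum1_card big_mkcond /= (reindex_inj (@perm_inj _ p)) /=.
apply: leq_sum => w _; rewrite inE.
case: ifP => // /Cnd_perm ->; by [].
Qed.

Lemma aft_map p x u : aft (p x) (map p u) = map p (aft x u).
Proof.
elim: u => //= a u IH; rewrite (mem_map (@perm_inj _ p)) (inj_eq (@perm_inj _ p)).
by case: ifP => // _; case: ifP.
Qed.

Lemma MTR_sum x0 t s : MTR t s = (\sum_(j < size s) (depth (nth x0 s j) (run t (take j s))).+1)%N.
Proof.
elim: s t => [|a s IH] t /=; first by rewrite big_ord0.
by rewrite big_ord_recl /= IH.
Qed.

Lemma first_occ (f : 'I_n -> nat) x0 S :
  (\sum_(j < size S) (nth x0 S j \notin take j S) * f (nth x0 S j) = \sum_(i | i \in S) f i)%N.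
Proof.
elim/last_ind: S => [|S a IH]; first by rewrite big_ord0 big_pred0.
rewrite size_rcons big_ord_recr /=.
have -> : (\sum_(j < size S) (nth x0 (rcons S a) (widen_ord (leqnSn (size S)) j) \notin take (widen_ord (leqnSn (size S)) j) (rcons S a)) *
            f (nth x0 (rcons S a) (widen_ord (leqnSn (size S)) j)) = \sum_(j < size S) (nth x0 S j \notin take j S) * f (nth x0 S j))%N.
  apply: eq_bigr => j _ /=; rewrite nth_rcons ltn_ord -cats1 takel_cat //; exact: ltnW.
rewrite IH nth_rcons ltnn eqxx -cats1 take_size_cat //.
case: (boolP (a \in S)) => aS /=.
- rewrite mul0n addn0; apply: eq_bigl => i; rewrite mem_cat inE; case: eqP => [->|_]; by rewrite ?aS ?orbF.
- rewrite mul1n [RHS](bigD1 a) /=; last by rewrite ?mem_cat ?mem_rcons ?inE ?eqxx ?orbT.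
  rewrite addnC; congr (_ + _)%N; apply: eq_bigl => i.
  rewrite mem_cat inE; case: eqP => [->|]; by rewrite ?(negbTE aS) ?orbF ?andbT.
Qed.

Lemma per_pi x0 T S p : full T ->
  (MTR T (map p S) <= size S +
     \sum_(j < size S) \sum_(w : 'I_n) ((w \in aft (nth x0 S j) (take j S)) &&
          Nb p (nth x0 S j) (suf w (aft (nth x0 S j) (take j S))) w : nat)
     + \sum_(i : 'I_n) depth i T)%N.
Proof.
move=> FT; rewrite (MTR_sum (p x0)) size_map.
apply: (@leq_trans (\sum_(j < size S) (1 + \sum_(w : 'I_n) ((w \in aft (nth x0 S j) (take j S)) &&
          Nb p (nth x0 S j) (suf w (aft (nth x0 S j) (take j S))) w : nat)
          + (nth x0 S j \notin take j S) * depth (p (nth x0 S j)) T))%N).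
  apply: leq_sum => j _; rewrite -addnA add1n ltnS (nth_map x0) // -map_take.
  apply: leq_trans (lemC _ _ FT) _.
  rewrite aft_map (mem_map (@perm_inj _ p)) leq_add2r; exact: card_Cnd.
rewrite !big_split /= sum_nat_const card_ord muln1 leq_add2l.
rewrite (first_occ (fun i => depth (p i) T)).
apply: (@leq_trans (\sum_i depth (p i) T)).
  rewrite big_mkcond; apply: leq_sum => i _; by case: ifP.
by rewrite [X in (_ <= X)%N](reindex_inj (@perm_inj _ p)).
Qed.

End PerPi.
Lemma onth_nth (T : Type) (x0 : T) s i : (i < size s)%N -> onth s i = Some (nth x0 s i).
Proof. elim: s i => //= a s IH [|i] //= h; exact: IH. Qed.

Section WSet.
Variable n : nat.
Implicit Types (x X : 'I_n) (u S : seq 'I_n).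

Lemma aft_drop x0 X u : exists q, [/\ (q <= size u)%N, aft X u = drop q u &
   forall i, (i < size u)%N -> nth x0 u i = X -> (i < q)%N].
Proof.
case: (boolP (X \in u)) => Xu.
- case: (aft_split Xu) => u1 E; exists (size u1).+1; split.
  + by rewrite {1}E size_cat /= addnS ltnS leq_addr.
  + by rewrite {2}E -cat_rcons drop_size_cat // size_rcons.
  + move=> i iu Ei; rewrite ltnNge; apply/negP => qi.
    have : nth x0 u i \in aft X u.
      rewrite {1}E -cat_rcons nth_cat; rewrite (size_rcons u1 X) ltnNge qi /=; apply: mem_nth.
      have E' : size u = ((size u1).+1 + size (aft X u))%N by rewrite {1}E size_cat /= addSnnS.
      by rewrite ltn_subLR // -E'.
    by rewrite Ei (negbTE (aft_notin X u)).
- exists 0; split => //; first by rewrite aft_nin // drop0.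
  by move=> i iu Ei; move: Xu; rewrite -Ei mem_nth.
Qed.

Lemma wset_ge x0 S j : (j < size S)%N ->
  ((size (undup (aft (nth x0 S j) (take j S)))).+1 <= wset_size S j.+1)%N.
Proof.
move=> jS; set X := nth x0 S j; set u := take j S.
have su : size u = j by rewrite size_takel // ltnW.
case: (aft_drop x0 X u) => q [qu Eq Hq].
have rq : (rho S j.+1 <= q)%N.
  rewrite /rho big_seq_cond.
  apply: (big_ind (fun v => v <= q)%N) => //; first by move=> a b; rewrite geq_max => -> ->.
  move=> k /andP [kr]; rewrite mem_index_iota in kr; case/andP: kr => k1 kj.
  rewrite /= (@onth_nth _ x0 S j) // (@onth_nth _ x0 S k.-1); last by move: kj jS; clear; lia.
  move=> /eqP [Ek].
  have : (k.-1 < q)%N.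
    have kj' : (k.-1 < j)%N by move: kj k1; clear; lia.
    apply: Hq; first by rewrite su.
    by rewrite /u nth_take.
  by move: k1; clear; lia.
rewrite /wset_size.
have Hsub : {subset undup (map Some (X :: aft X u)) <= undup [seq onth S i.-1 | i <- index_iota (rho S j.+1).+1 j.+2]}.
  move=> o; rewrite !mem_undup => /mapP [v]; rewrite inE => /orP [/eqP ->|vin] ->.
  + apply/mapP; exists j.+1; last by rewrite /= (onth_nth x0).
    rewrite mem_index_iota; move: rq qu; rewrite su; clear; lia.
  + move: vin; rewrite Eq => /(nthP x0) [i'] ; rewrite size_drop => i'u <-.
    apply/mapP; exists (q + i').+1.
      by rewrite mem_index_iota !ltnS; apply/andP; split;
        [apply: leq_trans rq (leq_addr _ _) | move: i'u; rewrite su; clear; lia].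
    rewrite /= (onth_nth x0); last by move: i'u jS; rewrite su; clear; lia.
    by rewrite nth_drop /u nth_take //; move: i'u; rewrite su; clear; lia.
apply: leq_trans (uniq_leq_size (undup_uniq _) Hsub).
rewrite undup_map_inj; last by move=> a b [].
by rewrite size_map /= (negbTE (aft_notin X u)).
Qed.

End WSet.
From mathcomp Require Import lra ring.
Local Open Scope ring_scope.

Lemma ln_le' (x y : R) : 0 < x -> x <= y -> ln x <= ln y.
Proof.
move=> /RltP hx /RleP hxy; apply/RleP.
case: (Rle_lt_or_eq_dec _ _ hxy) => [h|<-]; last exact: Rle_refl.
exact: Rlt_le (ln_increasing _ _ hx h).
Qed.

Lemma key (a : R) : 0 < a -> ln a + (a + 1)^-1 <= ln (a + 1)%R.
Proof.
move=> ha.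
have ha1 : 0 < a + 1 by lra.
have H1 : 1 + - (a + 1)^-1 <= exp (- (a + 1)^-1) by apply/RleP; exact: exp_ineq1_le.
have E1 : 1 + - (a + 1)^-1 = a * (a + 1)^-1 by field; lra.
rewrite E1 in H1.
have pa : 0 < a * (a + 1)^-1 by rewrite divr_gt0.
have H2 := ln_le' pa H1.
have E2 : ln (exp (- (a + 1)^-1)) = - (a + 1)^-1 by apply: ln_exp.
have E3 : ln (a * (a + 1)^-1) = ln a + ln ((a + 1)^-1).
  apply: ln_mult; apply/RltP => //; by rewrite invr_gt0.
have E4 : ln ((a + 1)^-1) = - ln (a + 1) by apply: ln_Rinv; apply/RltP.
rewrite E2 E3 E4 in H2; lra.
Qed.

Definition H (K : nat) : R := \sum_(i < K) (i.+1%:R)^-1.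

Lemma harm K : H K.+1 <= 1 + ln (K.+1)%:R.
Proof.
elim: K => [|K IH].
  rewrite /H big_ord1 invr1; have -> : ln 1%:R = 0 by exact: ln_1. lra.
have E : H K.+2 = H K.+1 + K.+2%:R^-1 by rewrite /H big_ord_recr.
rewrite E.
have := key (a := K.+1%:R) (ltr0Sn _ _).
have -> : (K.+1%:R + 1)%R = K.+2%:R :> R by rewrite natr1.
move: IH => IH h; set z := K.+2%:R^-1 in h *; set u := ln K.+1%:R in IH h; set v := ln K.+2%:R in h *; lra.
Qed.

Lemma harm' K k : (K < k)%N -> H K <= 1 + ln k%:R.
Proof.
move=> Kk; case: K Kk => [|K] Kk.
  have h0 : 0 <= ln k%:R.
    have -> : 0 = ln 1%R by symmetry; exact: ln_1.
    apply: ln_le'; first lra. by rewrite (_ : 1 = 1%:R) // ler_nat.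
  by rewrite /H big_ord0; lra.
apply: le_trans (harm K) _; rewrite lerD2l; apply: ln_le' => //.
by rewrite ler_nat ltnW.
Qed.
Section Final.
Variable n : nat.
Implicit Types (X w : 'I_n) (V : seq 'I_n).

Lemma lemE V : \sum_(w | w \in V) ((size (undup (suf w V)))%:R)^-1 = H (size (undup V)).
Proof.
elim: V => [|a V IH].
  by rewrite big_pred0 // /H big_ord0.
rewrite /=; case: ifP => aV.
- rewrite -IH (eq_bigl (fun w => w \in V)); last first.
    by move=> w; rewrite inE; case: eqP => // ->.
  apply: eq_bigr => w wV; by rewrite /= wV.
- rewrite (bigD1 a) /=; last by rewrite inE eqxx.
  rewrite aV /= (eq_bigl (fun w => w \in V)); last first.
    move=> w; rewrite inE; case: eqP => [->|_]; first by rewrite aV.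
    by rewrite andbT.
  rewrite (eq_bigr (fun w => ((size (undup (suf w V)))%:R)^-1)); last first.
    by move=> w wV; rewrite wV.
  by rewrite IH /H big_ord_recr /= addrC aV.
Qed.

Lemma lemF X V : X \notin V ->
  (\sum_(p : 'S_n) \sum_(w : 'I_n) ((w \in V) && Nb p X (suf w V) w : nat))%:R
    <= (2 * n`!)%:R * H (size (undup V)).
Proof.
move=> XV; rewrite exchange_big natr_sum /= -lemE mulr_sumr.
rewrite [X in _ <= X]big_mkcond /=; apply: ler_sum => w _.
case: (boolP (w \in V)) => wV /=; last by rewrite big1.
have ws : w \in suf w V by apply: suf_mem.
have Xs : X \notin suf w V by apply/negP => /suf_subset XV'; move: XV; rewrite XV'.
have := lemD ws Xs.
have sp : (0 < size (undup (suf w V)))%N by rewrite -has_predT; apply/hasP; exists w; rewrite ?mem_undup.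
move=> h; rewrite ler_pdivlMr ?ltr0n // -natrM ler_nat; exact: h.
Qed.

End Final.
Theorem mainTheorem9 :
  exists c : R, 0 < c /\
    forall (n m : nat) (S : seq 'I_n) (T : tree 'I_n),
      (1 <= n)%N -> (1 <= m)%N -> size S = m -> is_bst_on T ->
      expected_MTR T S <=
        c * (WS S + m%:R + (\sum_(i < n) depth i T)%N%:R).
Proof.
exists 3; split; first lra.
move=> n m S T n1 m1 Sm FT.
have FT' : full T := FT.
pose x0 : 'I_n := Ordinal n1.
set D := (\sum_(i < n) depth i T)%N.
set N := n`!.
have Npos : 0 < (N%:R : R)%R by rewrite ltr0n fact_gt0.
pose C (j : 'I_(size S)) (p : 'S_n) := (\sum_(w : 'I_n) ((w \in aft (nth x0 S j) (take j S)) &&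
          Nb p (nth x0 S j) (suf w (aft (nth x0 S j) (take j S))) w : nat))%N.
pose k (j : 'I_(size S)) := wset_size S j.+1.
have Hpi : forall p : 'S_n, ((MTR T (map p S))%:R : R)%R <= (size S + D)%:R + \sum_(j < size S) ((C j p)%:R : R)%R.
  move=> p; have := @per_pi n x0 T S p FT'; rewrite -(ler_nat R) => h; apply: le_trans h _.
  rewrite !natrD natr_sum -/D /C; lra.
have Hj : forall j : 'I_(size S), (\sum_(p : 'S_n) ((C j p)%:R : R)%R) <= N%:R * (2%:R * (1 + ln (k j)%:R)).
  move=> j; rewrite -natr_sum.
  apply: le_trans (lemF (aft_notin (nth x0 S j) (take j S))) _.
  rewrite natrM -mulrA [X in _ <= X]mulrCA mulrA [X in _ <= X]mulrA.
  apply: ler_wpM2l; first by rewrite mulr_ge0 // ler0n.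
  exact: harm' (wset_ge x0 (ltn_ord j)).
have Hsum : \sum_(p : 'S_n) ((MTR T (map p S))%:R : R)%R <=
    N%:R * ((size S + D)%:R + \sum_(j < size S) 2%:R * (1 + ln (k j)%:R)).
  apply: le_trans (ler_sum _ (fun p _ => Hpi p)) _.
  rewrite big_split /= exchange_big /= mulrDr mulr_sumr.
  apply: lerD.
    by rewrite sumr_const card_Sn mulr_natl lexx.
  by apply: ler_sum => j _; exact: Hj j.
have Hexp : expected_MTR T S <= (size S + D)%:R + \sum_(j < size S) 2%:R * (1 + ln (k j)%:R).
  by rewrite /expected_MTR ler_pdivrMr // mulrC.
apply: le_trans Hexp _.
have E2 : IZR 2 = 2%:R :> R by rewrite -INRE.
have l1 : 0 < ln 2%:R.
  rewrite -E2; apply/RltP; apply: Rlt_trans (ln_lt_2); apply: Rinv_0_lt_compat; exact: Rlt_0_2.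
have l2 : ln 2%:R < 1.
  have e1 : Rlt (2%:R) (exp 1) by exact: exp_ineq1 R1_neq_R0.
  have e0 : Rlt 0 (2%:R) by apply/RltP; rewrite ltr0n.
  have h := ln_increasing _ _ e0 e1; rewrite ln_exp in h; exact/RltP.
have Hk : forall j : 'I_(size S), 0 <= ln (k j)%:R <= log2 (k j)%:R.
  move=> j; have kj := wset_ge x0 (ltn_ord j).
  have h0 : 0 <= ln (k j)%:R.
    have -> : 0 = ln 1%R by symmetry; exact: ln_1.
    apply: ln_le'; first lra. rewrite (_ : 1 = 1%:R) // ler_nat.
    by apply: leq_trans kj.
  rewrite h0 /= /log2 E2 ler_pdivlMr //; apply: ler_piMr => //; exact: ltW.
have WSE : WS S = \sum_(j < size S) log2 (k j)%:R.
  by rewrite /WS big_add1 /= big_mkord.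
set L := \sum_(j < size S) ln (k j)%:R.
have L0 : 0 <= L by apply: sumr_ge0 => j _; case/andP: (Hk j).
have LW : L <= WS S by rewrite WSE; apply: ler_sum => j _; case/andP: (Hk j).
have E : \sum_(j < size S) 2%:R * (1 + ln (k j)%:R) = 2%:R * ((size S)%:R + L) :> R.
  by rewrite -mulr_sumr big_split /= sumr_const card_ord.
rewrite E natrD -Sm.
have D0 : 0 <= (D%:R : R)%R by rewrite ler0n.
lra.
Qed.
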